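(* Let $0/1 = p_0/q_0 \prec \cdots \prec p_{n+1}/q_{n+1} = 1/0$ be a sequence of slopes and let $\Sigma_0,\dots,\Sigma_{n+1}\subset\#^n\mathbb{C}P^2$ be the configuration of spheres built from it as described in the context. Then $\sum_{i=0}^{n+1}\Sigma_i\cdot\Sigma_i = 3n$.
   Context: Slopes: nonnegative rationals $p/q$ in lowest terms or $1/0$; $\Delta(p/q,r/s)=|ps-qr|$; $p/q\prec r/s$ means $p/q<r/s$ ($1/0$ largest) and $\Delta=1$. The configuration is built inductively: for $n=1$ (sequence $0/1\prec1/1\prec1/0$), $\Sigma_0,\Sigma_2$ are two complex lines in $\mathbb{C}P^2$ and $\Sigma_1$ a third complex line with reversed orientation; for $n>1$, pick $i$ with $p_{i-1}/q_{i-1}\prec p_{i+1}/q_{i+1}$, build the configuration for the sequence with $p_i/q_i$ removed, then blow up with a new copy of $\mathbb{C}P^2$ at the intersection point of the spheres for $p_{i-1}/q_{i-1}$ and $p_{i+1}/q_{i+1}$, replacing those by their transforms and adding as $\Sigma_i$ a complex line of the new summand with reversed orientation. The resulting spheres satisfy $\Sigma_i\cdot\Sigma_i=\Delta(p_{i-1}/q_{i-1},p_{i+1}/q_{i+1})$ with indices mod $n+2$. *)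

(* Defs.v *)
From mathcomp Require Import all_boot all_order all_algebra.
Set Implicit Arguments. Unset Strict Implicit. Unset Printing Implicit Defensive.
Import Order.TTheory GRing.Theory Num.Theory.
Local Open Scope ring_scope.

(* A slope p/q is a pair (p, q) of naturals in lowest terms; 1/0 is (1, 0). *)
Definition slope := (nat * nat)%type.
Definition is_slope (a : slope) : bool := coprime a.1 a.2.

Definition Delta (a b : slope) : nat :=
  absz ((a.1 * b.2)%:Z - (a.2 * b.1)%:Z).

(* p/q < r/s, with 1/0 the largest element (cross-multiplication). *)
Definition slope_lt (a b : slope) : bool := (a.1 * b.2 < b.1 * a.2)%N.

Definition prec (a b : slope) : bool := slope_lt a b && (Delta a b == 1%N).

(* Second homology of #^n CP^2 is Z^n (classes = seq int of length n, in the
   basis of complex lines of the summands) with intersection form the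
   standard diagonal form diag(1,...,1). *)
Definition iform (u v : seq int) : int := \sum_(k < size u) u`_k * v`_k.

(* [config s n cls]: cls (list of homology classes of Sigma_0..Sigma_{n+1},
   in H_2(#^n CP^2)) is a configuration obtained by the inductive
   construction from the slope sequence s. *)
Inductive config : seq slope -> nat -> seq (seq int) -> Prop :=
| config_base :
    config [:: (0%N, 1%N); (1%N, 1%N); (1%N, 0%N)] 1
           [:: [:: 1]; [:: -1]; [:: 1]]
| config_blowup (s : seq slope) (n : nat) (cls : seq (seq int))
    (i : nat) (r : slope) :
    config s n cls ->
    (0 < i < size s)%N ->
    is_slope r ->
    prec (nth (0%N, 0%N) s i.-1) r -> prec r (nth (0%N, 0%N) s i) ->
    (* new slope inserted at position i; new CP^2 summand is the last
       coordinate; e = class of its complex line.  The transforms of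
       Sigma_{i-1}, Sigma_{i+1} are A + e and B - e, the new sphere is -e;
       all other classes are unchanged (extended by 0). *)
    config (take i s ++ r :: drop i s) n.+1
      (take i.-1 [seq rcons c 0 | c <- cls] ++
         [:: rcons (nth [::] cls i.-1) 1;
             rcons (nseq n 0) (-1);
             rcons (nth [::] cls i) (-1)] ++
         drop i.+1 [seq rcons c 0 | c <- cls]).

(* Main.v *)
Require Import Defs.
From mathcomp Require Import all_boot all_order all_algebra.
From mathcomp Require Import zify ring.
Import Order.TTheory GRing.Theory Num.Theory.
Local Open Scope ring_scope.

Lemma iform_rcons (c : seq int) (x : int) :
  iform (rcons c x) (rcons c x) = iform c c + x * x.
Proof.
rewrite /iform size_rcons big_ord_recr /= !nth_rcons ltnn eqxx.
congr (_ + _); apply: eq_bigr => k _; by rewrite !nth_rcons ltn_ord.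
Qed.

Definition tot (cls : seq (seq int)) : int := \sum_(c <- cls) iform c c.

Lemma tot_map0 (cls : seq (seq int)) : tot [seq rcons c 0 | c <- cls] = tot cls.
Proof.
rewrite /tot big_map; apply: eq_bigr => c _; by rewrite iform_rcons mulr0 addr0.
Qed.

Lemma config_inv s n cls : config s n cls ->
  [/\ size cls = size s, size s = n.+2 & tot cls = (3 * n)%:Z].
Proof.
elim=> [|{}s {}n {}cls i r _ [Hsz Hs Ht] /andP[Hi0 Hi] _ _ _].
  by split=> //; rewrite /tot !big_cons big_nil /iform /= !big_ord_recr !big_ord0.
have Hi1 : (i.-1 < size cls)%N by rewrite Hsz; case: i Hi0 Hi => //= i _ /ltnW.
have Hi' : (i < size cls)%N by rewrite Hsz.
split.
- rewrite !size_cat /= size_take size_map Hi1 size_drop size_map.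
  rewrite size_take size_drop Hsz in Hi' *; rewrite Hi'.
  case: i Hi0 Hi Hi1 Hi' => //= i _ _ _ Hi'; lia.
- rewrite size_cat /= size_take size_drop Hi; lia.
- rewrite /tot big_cat big_cat /= !big_cons big_nil.
  rewrite -map_take -map_drop -!/(tot _) !tot_map0 !iform_rcons.
  have -> : iform (nseq n 0) (nseq n 0) = 0.
    by rewrite /iform size_nseq big1 // => k _; rewrite nth_nseq ltn_ord mulr0.
  move: Ht; rewrite -{1}(cat_take_drop i.-1 cls) (drop_nth [::] Hi1).
  have -> : i.-1.+1 = i by case: i Hi0 {Hi Hi1 Hi'}.
  rewrite (drop_nth [::] Hi') /tot big_cat !big_cons /= => Ht.
  rewrite mulnSr PoszD -Ht -!/(tot _).
  rewrite (_ : 3%N = 1 + 1 + 1)%N // !PoszD. ring.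
Qed.

Theorem mainTheorem6 (n : nat) (s : seq slope) (cls : seq (seq int)) :
  size s = n.+2 ->
  all is_slope s ->
  nth (0%N, 0%N) s 0 = (0%N, 1%N) ->
  nth (0%N, 0%N) s n.+1 = (1%N, 0%N) ->
  (forall i : nat, (i <= n)%N -> prec (nth (0%N, 0%N) s i) (nth (0%N, 0%N) s i.+1)) ->
  config s n cls ->
  \sum_(i < n.+2) iform (nth [::] cls i) (nth [::] cls i) = (3 * n)%:Z.
Proof.
move=> _ _ _ _ _ /config_inv [Hc Hs Ht].
rewrite -Ht /tot -(big_mkord xpredT (fun i => iform (nth [::] cls i) (nth [::] cls i))).
rewrite -Hs -Hc; by rewrite (big_nth [::]).
Qed.
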